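(* Let $G$ be a finite simple graph, $s\ge1$, $e_1,\dots,e_s$ edges of $G$ (repetitions allowed). Suppose $u=p_0,p_1,\dots,p_{2k+1}=v$ is an even-connection between $u$ and $v$ and $z=q_0,q_1,\dots,q_{2l+1}=w$ is an even-connection between $z$ and $w$, both with respect to $e_1\cdots e_s$. If for some $0\le i\le k-1$ and $0\le j\le l-1$ the edges $p_{2i+1}p_{2i+2}$ and $q_{2j+1}q_{2j+2}$ have a common vertex, then $u$ is even-connected to $z$ or to $w$ with respect to $e_1\cdots e_s$, and $v$ is even-connected to $z$ or to $w$ with respect to $e_1\cdots e_s$.
   Context: Edges are identified with monomials. An even-connection between $u$ and $v$ (possibly equal) with respect to $e_1,\dots,e_s$ is a sequence of vertices $p_0,\dots,p_{2k+1}$, $k\ge1$ (repeats allowed), with (1) $p_0=u$, $p_{2k+1}=v$; (2) for all $0\le l\le k-1$, $p_{2l+1}p_{2l+2}=e_i$ for some $i$; (3) for every $i$, $|\{l\ge0: p_{2l+1}p_{2l+2}=e_i\}|\le|\{j: e_j=e_i\}|$; (4) each $p_rp_{r+1}$, $0\le r\le 2k$, is an edge of $G$. $u,v$ are even-connected if such a sequence exists. *)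

(* Defs.v *)
From mathcomp Require Import all_boot.
Set Implicit Arguments. Unset Strict Implicit. Unset Printing Implicit Defensive.

Definition simple_graph (V : finType) (G : rel V) : Prop :=
  symmetric G /\ irreflexive G.

(* Edges are identified with (squarefree degree-2) monomials, i.e. unordered
   pairs: (a,b) and (c,d) denote the same edge iff {a,b} = {c,d}. *)
Definition edge_eq (V : eqType) (e f : V * V) : bool :=
  ((e.1 == f.1) && (e.2 == f.2)) || ((e.1 == f.2) && (e.2 == f.1)).

(* The "odd" edge p_{2l+1} p_{2l+2} of a sequence p (defaults never used
   inside the range). *)
Definition odd_edge (V : Type) (x0 : V) (p : seq V) (l : nat) : V * V :=
  (nth x0 p (2 * l + 1), nth x0 p (2 * l + 2)).

Definition even_connection (V : finType) (G : rel V) (es : seq (V * V))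
    (u v : V) (k : nat) (p : seq V) : Prop :=
  1 <= k /\
  size p = 2 * k + 2 /\
  nth u p 0 = u /\ nth u p (2 * k + 1) = v /\
  (forall l, l < k -> has (edge_eq (odd_edge u p l)) es) /\
  (forall i, i < size es ->
     count (fun l => edge_eq (odd_edge u p l) (nth (pair u u) es i)) (iota 0 k)
     <= count (edge_eq (nth (pair u u) es i)) es) /\
  (forall r, r < 2 * k + 1 -> G (nth u p r) (nth u p r.+1)).

Definition even_connected (V : finType) (G : rel V) (es : seq (V * V))
    (u v : V) : Prop :=
  exists k p, @even_connection V G es u v k p.

Definition share_vertex (V : eqType) (e f : V * V) : bool :=
  [|| e.1 == f.1, e.1 == f.2, e.2 == f.1 | e.2 == f.2].

(* Main.v *)
Require Import Defs.
From mathcomp Require Import all_boot zify.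
Set Implicit Arguments. Unset Strict Implicit.

Definition swp (V : Type) (f : V * V) := (f.2, f.1).

Fixpoint walkv (V : Type) (x : V) (E : seq (V * V)) (y : V) : seq V :=
  match E with [::] => [:: x; y] | f :: E' => x :: f.1 :: walkv f.2 E' y end.

Fixpoint gwalk (V : Type) (G : rel V) x (E : seq (V * V)) y : bool :=
  match E with [::] => G x y | f :: E' => [&& G x f.1, G f.1 f.2 & gwalk G f.2 E' y] end.

Lemma gwalk_cat (V : Type) (G : rel V) x A f B y :
  gwalk G x (A ++ f :: B) y = [&& gwalk G x A f.1, G f.1 f.2 & gwalk G f.2 B y].
Proof. elim: A x => [|g A IH] x //=. by rewrite IH !andbA. Qed.

Lemma gwalk_rev (V : Type) (G : rel V) (Hsym : symmetric G) x E y :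
  gwalk G x E y -> gwalk G y (rev (map (@swp V) E)) x.
Proof.
elim: E x => [|f E IH] x /=; first by rewrite Hsym.
case/and3P => H1 H2 H3. rewrite rev_cons -cats1 gwalk_cat /swp /=.
by rewrite (IH _ H3) Hsym H2 Hsym H1.
Qed.

Lemma walkv0 (V : Type) (x : V) E y d : nth d (walkv x E y) 0 = x.
Proof. by case: E. Qed.

Lemma size_walkv (V : Type) (x : V) E y : size (walkv x E y) = 2 * size E + 2.
Proof. elim: E x => [|f E IH] x //=. rewrite IH. lia. Qed.

Lemma nth_walkv_last (V : Type) (x : V) E y d : nth d (walkv x E y) (2 * size E + 1) = y.
Proof.
elim: E x => [|f E IH] x //.
have -> : 2 * size (f :: E) + 1 = (2 * size E + 1).+2 by rewrite /size; lia.
exact: IH.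
Qed.

Lemma nth_walkv (V : Type) (x : V) E y d e0 m : m < size E ->
  nth d (walkv x E y) (2*m+1) = (nth e0 E m).1 /\ nth d (walkv x E y) (2*m+2) = (nth e0 E m).2.
Proof.
elim: E x m => [|f E IH] x [|m] // Hm.
  by rewrite /= walkv0.
have -> : 2 * m.+1 + 1 = (2 * m + 1).+2 by lia.
have -> : 2 * m.+1 + 2 = (2 * m + 2).+2 by lia.
exact: IH.
Qed.

Lemma gwalkP (V : Type) (G : rel V) x E y d : gwalk G x E y <->
  (forall r, r < 2 * size E + 1 -> G (nth d (walkv x E y) r) (nth d (walkv x E y) r.+1)).
Proof.
elim: E x => [|f E IH] x /=.
  split; first by move=> H [|r]. by move=> H; apply: (H 0).
split.
  case/and3P => H1 H2 /(IH f.2) H3 [|[|r]] Hr /=; [done|by rewrite walkv0|].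
  apply: H3. move: Hr. rewrite /size -/(size E). lia.
move=> H; apply/and3P; split; first exact: (H 0).
  by move: (H 1 ltac:(lia)); rewrite /= walkv0.
apply/IH => r Hr. exact: (H r.+2 ltac:(lia)).
Qed.

Lemma walkv_eq (V : Type) d e0 (E : seq (V * V)) : forall (p : seq V) x y,
  size p = 2 * size E + 2 -> nth d p 0 = x -> nth d p (2 * size E + 1) = y ->
  (forall m, m < size E -> nth d p (2*m+1) = (nth e0 E m).1 /\ nth d p (2*m+2) = (nth e0 E m).2) ->
  p = walkv x E y.
Proof.
elim: E => [|f E IH] [|p0 [|p1 p]] x y //; try (move=> Hs; exfalso; move: Hs => /=; lia).
  by case: p => //= _ -> ->.
move=> Hs H0 Hl Hm. have [H1 H2] := Hm 0 erefl.
rewrite /= in H0 H1 H2. rewrite -H0 /= -H1; congr (_ :: _ :: _).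
apply: IH => //.
- move: Hs => /=. lia.
- move: Hl. by have -> : 2 * (size E).+1 + 1 = (2 * size E + 1).+2 by lia.
- move=> m Hm'. have := Hm m.+1 ltac:(rewrite /=; lia).
  have -> : 2 * m.+1 + 1 = (2 * m + 1).+2 by lia.
  by have -> : 2 * m.+1 + 2 = (2 * m + 2).+2 by lia.
Qed.

Definition cntE (V : eqType) (e : V * V) (E : seq (V * V)) := count (fun f => edge_eq f e) E.

Definition good (V : finType) (G : rel V) (es : seq (V * V)) x E y :=
  [/\ 0 < size E, gwalk G x E y, all (fun f => has (edge_eq f) es) E &
      forall e, e \in es -> cntE e E <= count (edge_eq e) es].

Lemma to_ec (V : finType) (G : rel V) es x E y :
  good G es x E y -> even_connection G es x y (size E) (walkv x E y).
Proof.
case=> Hs Hw Ha Hc. set W := walkv x E y.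
have Hodd : forall l, l < size E -> odd_edge x W l = nth (x, x) E l.
  move=> l Hl; have [h1 h2] := @nth_walkv _ x E y x (x, x) l Hl.
  by rewrite /odd_edge h1 h2 -surjective_pairing.
split; first done. split; first by rewrite size_walkv.
split; first exact: walkv0. split; first exact: nth_walkv_last.
split. move=> l Hl; rewrite Hodd //; exact: (allP Ha _ (mem_nth _ Hl)).
split.
  move=> i Hi.
  rewrite (eq_in_count (a2 := fun l => edge_eq (nth (x, x) E l) (nth (x, x) es i))); last first.
    by move=> l; rewrite mem_iota => /andP[_ Hl]; rewrite Hodd.
  have -> : count (fun l => edge_eq (nth (x, x) E l) (nth (x, x) es i)) (iota 0 (size E))
     = cntE (nth (x, x) es i) E.
    by rewrite /cntE -[in RHS](mkseq_nth (x, x) E) /mkseq count_map.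
  apply: Hc; exact: mem_nth.
move=> r Hr; exact: (proj1 (@gwalkP _ G x E y x) Hw r Hr).
Qed.

Lemma of_ec (V : finType) (G : rel V) es x y k p :
  even_connection G es x y k p -> exists E, [/\ good G es x E y, size E = k &
    forall l, l < k -> odd_edge x p l = nth (x, x) E l].
Proof.
case=> Hk [Hsz [H0 [Hlast [Ha [Hc Hadj]]]]].
set E := mkseq (odd_edge x p) k.
have HE : size E = k by rewrite size_mkseq.
have Hn : forall l, l < k -> odd_edge x p l = nth (x, x) E l.
  by move=> l Hl; rewrite nth_mkseq.
have Hp : p = walkv x E y.
  apply: (@walkv_eq _ x (x, x)); rewrite ?HE //.
  by move=> m Hm; rewrite -Hn.
exists E; split => //. split.
- by rewrite HE.
- apply/(@gwalkP _ _ _ _ _ x); rewrite -Hp HE; exact Hadj.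
- apply/allP => f /mapP [l]; rewrite mem_iota => /andP[_ Hl'] ->; exact: Ha.
- move=> e He. have Hi : index e es < size es by rewrite index_mem.
  have := Hc _ Hi. rewrite nth_index //.
  by rewrite /cntE /E /mkseq count_map.
Qed.

Lemma edge_eq_refl (V : eqType) (e : V * V) : edge_eq e e.
Proof. by rewrite /edge_eq !eqxx. Qed.

Lemma edge_eq_sym (V : eqType) (e f : V * V) : edge_eq e f = edge_eq f e.
Proof.
move: e f => [a b] [c d]; rewrite /edge_eq /=.
by apply/idP/idP => /orP[/andP[/eqP-> /eqP->]|/andP[/eqP-> /eqP->]]; rewrite !eqxx ?orbT.
Qed.

Lemma edge_eq_trans (V : eqType) (e f g : V * V) : edge_eq e f -> edge_eq f g -> edge_eq e g.
Proof.
move: e f g => [a b] [c d] [x y]; rewrite /edge_eq /=.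
by move=> /orP[/andP[/eqP-> /eqP->]|/andP[/eqP-> /eqP->]]
  /orP[/andP[/eqP-> /eqP->]|/andP[/eqP-> /eqP->]]; rewrite !eqxx ?orbT.
Qed.

Lemma edge_eq_swp (V : eqType) (e f : V * V) : edge_eq (swp e) f = edge_eq e f.
Proof. move: e f => [a b] [c d]; by rewrite /edge_eq /swp /= orbC (andbC (b == c)) (andbC (b == d)). Qed.

Lemma share_of_eq (V : eqType) (e f : V * V) : edge_eq e f -> share_vertex e f.
Proof.
move: e f => [a b] [c d]; rewrite /edge_eq /share_vertex /=.
by case/orP => /andP[-> _]; rewrite ?orbT.
Qed.

Lemma cntE_swp (V : eqType) (e : V * V) E : cntE e (rev (map (@swp V) E)) = cntE e E.
Proof. rewrite /cntE count_rev count_map; apply: eq_count => f /=; exact: edge_eq_swp. Qed.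

Lemma cnt_cat_disj (V : eqType) (e : V * V) A B N :
  (forall g h, g \in A -> h \in B -> ~~ edge_eq g h) ->
  cntE e A <= N -> cntE e B <= N -> cntE e (A ++ B) <= N.
Proof.
move=> Hd HA HB; rewrite /cntE count_cat.
case: (posnP (count (fun f => edge_eq f e) A)) => [->|HA0]; first by rewrite add0n.
case: (posnP (count (fun f => edge_eq f e) B)) => [->|HB0]; first by rewrite addn0.
exfalso. rewrite -has_count in HA0. rewrite -has_count in HB0.
case/hasP: HA0 => g Hg Hge. case/hasP: HB0 => h Hh Hhe.
move: (Hd g h Hg Hh); rewrite (edge_eq_trans Hge) //; by rewrite edge_eq_sym.
Qed.

Lemma good_rev (V : finType) (G : rel V) es x E y : symmetric G ->
  good G es x E y -> good G es y (rev (map (@swp V) E)) x.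
Proof.
move=> Hsym [Hs Hw Ha Hc]; split.
- by rewrite size_rev size_map.
- exact: gwalk_rev.
- rewrite all_rev all_map; apply/allP => f Hf /=.
  rewrite (eq_has (a2 := edge_eq f)); first exact: (allP Ha).
  by move=> g; rewrite edge_eq_swp.
- by move=> e He; rewrite cntE_swp; apply: Hc.
Qed.

Lemma good_cat (V : finType) (G : rel V) es x A B y :
  gwalk G x (A ++ B) y -> 0 < size (A ++ B) ->
  all (fun f => has (edge_eq f) es) A -> all (fun f => has (edge_eq f) es) B ->
  (forall g h, g \in A -> h \in B -> ~~ edge_eq g h) ->
  (forall e, e \in es -> cntE e A <= count (edge_eq e) es) ->
  (forall e, e \in es -> cntE e B <= count (edge_eq e) es) ->
  good G es x (A ++ B) y.
Proof.
move=> Hw Hs HA HB Hd CA CB; split => //; first by rewrite all_cat HA HB.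
move=> e He; apply: cnt_cat_disj => //; [exact: CA | exact: CB].
Qed.

Lemma decomp (T : eqType) (x0 : T) (s : seq T) m : m < size s ->
  s = take m s ++ nth x0 s m :: drop m.+1 s.
Proof. by move=> Hm; rewrite -drop_nth // cat_take_drop. Qed.

Lemma cnt_l (V : eqType) (e : V * V) Q1 h Q2 : cntE e (h :: Q1) <= cntE e (Q1 ++ h :: Q2).
Proof. rewrite /cntE count_cat /=; lia. Qed.
Lemma cnt_r (V : eqType) (e : V * V) Q1 h Q2 : cntE e (h :: Q2) <= cntE e (Q1 ++ h :: Q2).
Proof. rewrite /cntE count_cat /=; lia. Qed.

Lemma main_u (V : finType) (G : rel V) es (HG : simple_graph G) u v z w P Q :
  good G es u P v -> good G es z Q w ->
  (exists2 g, g \in P & has (share_vertex g) Q) ->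
  exists E, good G es u E z \/ good G es u E w.
Proof.
move=> HP HQ [g0 Hg0 Hsh0].
have Hsym : symmetric G := HG.1.
case: HP => HPs HPw HPa HPc. case: HQ => HQs HQw HQa HQc.
pose pr n := (n < size P) && has (share_vertex (nth (u, u) P n)) Q.
have Hex : exists n, pr n.
  by exists (index g0 P); rewrite /pr index_mem Hg0 nth_index.
case: (ex_minnP Hex) => m /andP[Hm Hshm] Hmin.
set f := nth (u, u) P m.
set P1 := take m P. set P2 := drop m.+1 P.
have HPd : P = P1 ++ f :: P2 by exact: decomp.
have Hdisj1 : forall g h, g \in P1 -> h \in Q -> ~~ edge_eq g h.
  move=> g h Hg Hh; apply/negP => /share_of_eq Hs.
  have Hi : index g P1 < size P1 by rewrite index_mem.
  have Hsz : size P1 = m by rewrite /P1 size_take Hm.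
  have Hg' : nth (u, u) P (index g P1) = g.
    by rewrite -(@nth_take m) ?nth_index // -Hsz.
  have : pr (index g P1).
    rewrite /pr Hg'; apply/andP; split; first by move: Hi Hm; rewrite Hsz; apply: ltn_trans.
    by apply/hasP; exists h.
  by move/Hmin; rewrite leqNgt -Hsz Hi.
have HPall1 : all (fun f => has (edge_eq f) es) P1 by move: HPa; rewrite HPd all_cat => /andP[].
have Hfall : has (edge_eq f) es by move: HPa; rewrite HPd all_cat /= => /and3P[].
have HcP1f : forall e, e \in es -> cntE e (P1 ++ [:: f]) <= count (edge_eq e) es.
  move=> e He; apply: leq_trans (HPc e He).
  by rewrite HPd /cntE -[P1 ++ f :: P2]/(P1 ++ [:: f] ++ P2) catA [X in _ <= X]count_cat leq_addr.
have HcP1 : forall e, e \in es -> cntE e P1 <= count (edge_eq e) es.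
  move=> e He; apply: leq_trans (HcP1f e He).
  by rewrite /cntE count_cat leq_addr.
move: HPw; rewrite HPd gwalk_cat => /and3P[Hw1 Hab _].
have HQdec : forall h, h \in Q -> exists Q1 Q2, [/\ Q = Q1 ++ h :: Q2,
     gwalk G z Q1 h.1, G h.1 h.2 & gwalk G h.2 Q2 w].
  move=> h Hh. exists (take (index h Q) Q), (drop (index h Q).+1 Q).
  have HQd : Q = take (index h Q) Q ++ h :: drop (index h Q).+1 Q.
    by rewrite {1}(@decomp _ h Q (index h Q)) ?nth_index ?index_mem.
  move: HQw; rewrite {1}HQd gwalk_cat => /and3P[H1 H2 H3]; by split.
have HQc_pre : forall Q1 h Q2 e, Q = Q1 ++ h :: Q2 -> e \in es ->
    cntE e (h :: Q1) <= count (edge_eq e) es /\ cntE e (h :: Q2) <= count (edge_eq e) es.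
  move=> Q1 h Q2 e HQd He; have := HQc e He; rewrite HQd => H.
  split; apply: leq_trans H; [exact: cnt_l | exact: cnt_r].
have HQall_pre : forall Q1 h Q2, Q = Q1 ++ h :: Q2 ->
    all (fun f => has (edge_eq f) es) (h :: Q1) /\ all (fun f => has (edge_eq f) es) (h :: Q2).
  move=> Q1 h Q2 HQd; move: HQa; rewrite HQd all_cat /= => /and3P[A1 A2 A3].
  by rewrite /= A1 A2 A3.
have Hrevall : forall Q1, all (fun f => has (edge_eq f) es) Q1 ->
    all (fun f => has (edge_eq f) es) (rev (map (@swp V) Q1)).
  move=> Q1 HA; rewrite all_rev all_map; apply/allP => g Hg /=.
  rewrite (eq_has (a2 := edge_eq g)); first exact: (allP HA).
  by move=> g'; rewrite edge_eq_swp.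
have Hrevmem : forall Q1 h', h' \in rev (map (@swp V) Q1) -> exists2 h'', h'' \in Q1 & edge_eq h' h''.
  move=> Q1 h'; rewrite mem_rev => /mapP[h'' Hh'' ->]; exists h'' => //.
  by rewrite edge_eq_swp edge_eq_refl.
case: (boolP (has (fun h => (f.1 == h.1) || (f.1 == h.2)) Q)) => [/hasP[h Hh Ha] | Hna].
- have [Q1 [Q2 [HQd HwQ1 Hh12 HwQ2]]] := HQdec h Hh.
  have [HA1 HA2] := HQall_pre _ _ _ HQd.
  have HinQ : forall h', (h' \in Q1) || (h' \in h :: Q2) -> h' \in Q.
    by move=> h'; rewrite HQd mem_cat in_cons; case/orP => ->; rewrite ?orbT.
  case/orP: Ha => /eqP Ha.
  + exists (P1 ++ h :: Q2); right. apply: good_cat => //.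
    * by rewrite gwalk_cat Hh12 HwQ2 -Ha Hw1.
    * by rewrite size_cat /= addnS.
    * move=> g h' Hg Hh'; apply: Hdisj1 => //; apply: HinQ; by rewrite Hh' orbT.
    * by move=> e He; have [] := HQc_pre _ _ _ e HQd He.
  + exists (P1 ++ swp h :: rev (map (@swp V) Q1)); left. apply: good_cat => //.
    * rewrite gwalk_cat /swp /= (Hsym h.2 h.1) Hh12 -Ha Hw1 /=. exact: gwalk_rev.
    * by rewrite size_cat /= addnS.
    * move: HA1 => /= /andP[B1 B2]. rewrite /= Hrevall // andbT.
      rewrite (eq_has (a2 := edge_eq h)) // => g'; by rewrite edge_eq_swp.
    * move=> g h' Hg; rewrite in_cons => /orP[/eqP->|Hh'].
        rewrite edge_eq_sym edge_eq_swp edge_eq_sym; exact: Hdisj1.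
      have [h'' Hh'' He''] := Hrevmem _ _ Hh'.
      apply/negP => Hgh; move/negP: (Hdisj1 g h'' Hg (HinQ h'' ltac:(by rewrite Hh''))); apply.
      exact: edge_eq_trans Hgh He''.
    * move=> e He; have [H1 _] := HQc_pre _ _ _ e HQd He.
      by move: H1; rewrite /cntE /= -/(cntE e (rev (map (@swp V) Q1))) cntE_swp edge_eq_swp.
- case/hasP: Hshm => h Hh Hsh.
  have Hna' : forall h', h' \in Q -> ~~ ((f.1 == h'.1) || (f.1 == h'.2)).
    by move=> h' Hh'; move/hasPn: Hna; apply.
  have Hnf : forall h', h' \in Q -> ~~ edge_eq f h'.
    move=> h' Hh'; apply/negP => He; move: (Hna' h' Hh').
    by move: He; rewrite /edge_eq => /orP[/andP[-> _]|/andP[-> _]]; rewrite ?orbT.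
  have Hb : (f.2 == h.1) || (f.2 == h.2).
    move: Hsh (Hna' h Hh); rewrite /share_vertex.
    by case: (f.1 == h.1); case: (f.1 == h.2); case: (f.2 == h.1); case: (f.2 == h.2).
  have [Q1 [Q2 [HQd HwQ1 Hh12 HwQ2]]] := HQdec h Hh.
  have [HA1 HA2] := HQall_pre _ _ _ HQd.
  have HinQ : forall h', (h' \in Q1) || (h' \in h :: Q2) -> h' \in Q.
    by move=> h'; rewrite HQd mem_cat in_cons; case/orP => ->; rewrite ?orbT.
  have HdA : forall g h', g \in P1 ++ [:: f] -> h' \in Q -> ~~ edge_eq g h'.
    move=> g h'; rewrite mem_cat inE => /orP[Hg|/eqP->] Hh'; [exact: Hdisj1|exact: Hnf].
  have HfA : all (fun f => has (edge_eq f) es) (P1 ++ [:: f]) by rewrite all_cat HPall1 /= Hfall.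
  case/orP: Hb => /eqP Hb.
  + exists ((P1 ++ [:: f]) ++ rev (map (@swp V) Q1)); left. apply: good_cat => //.
    * rewrite -catA /= gwalk_cat Hw1 Hab Hb. exact: gwalk_rev.
    * by rewrite size_cat size_cat /= addn1 ltn_addr.
    * by apply: Hrevall; move: HA1 => /andP[].
    * move=> g h' Hg Hh'. have [h'' Hh'' He''] := Hrevmem _ _ Hh'.
      apply/negP => Hgh; move/negP: (HdA g h'' Hg (HinQ h'' ltac:(by rewrite Hh''))); apply.
      exact: edge_eq_trans Hgh He''.
    * move=> e He; have [H1 _] := HQc_pre _ _ _ e HQd He.
      by rewrite cntE_swp; apply: leq_trans H1; rewrite /cntE /= leq_addl.
  + exists ((P1 ++ [:: f]) ++ Q2); right. apply: good_cat => //.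
    * by rewrite -catA /= gwalk_cat Hw1 Hab Hb.
    * by rewrite size_cat size_cat /= addn1 ltn_addr.
    * by move: HA2 => /andP[].
    * move=> g h' Hg Hh'; apply: HdA => //; apply: HinQ; by rewrite in_cons Hh' !orbT.
    * move=> e He; have [_ H1] := HQc_pre _ _ _ e HQd He.
      by apply: leq_trans H1; rewrite /cntE /= leq_addl.
Qed.

Lemma share_swp (V : eqType) (e f : V * V) : share_vertex (swp e) f = share_vertex e f.
Proof.
move: e f => [a b] [c d]; rewrite /share_vertex /swp /=.
by case: (a == c); case: (a == d); case: (b == c); case: (b == d).
Qed.

Theorem lemma6p13 (V : finType) (G : rel V) (es : seq (V * V))
  (HG : simple_graph G)
  (Hs : 1 <= size es)
  (Hes : forall e, e \in es -> G e.1 e.2)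
  (u v z w : V) (k l : nat) (p q : seq V)
  (Hp : even_connection G es u v k p)
  (Hq : even_connection G es z w l q)
  (i j : nat) (Hi : i < k) (Hj : j < l)
  (Hcommon : share_vertex (odd_edge u p i) (odd_edge z q j)) :
  (even_connected G es u z \/ even_connected G es u w) /\
  (even_connected G es v z \/ even_connected G es v w).
Proof.
have Hsym : symmetric G := HG.1.
have [P [HPg HPs HPn]] := of_ec Hp. have [Q [HQg HQs HQn]] := of_ec Hq.
have Hg : nth (u, u) P i \in P by rewrite mem_nth // HPs.
have Hh : has (share_vertex (nth (u, u) P i)) Q.
  apply/hasP; exists (nth (z, z) Q j); first by rewrite mem_nth // HQs.
  by rewrite -HPn // -HQn.
split.
- have [E [H|H]] := main_u HG HPg HQg (ex_intro2 _ _ (nth (u, u) P i) Hg Hh);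
    [left; exists (size E), (walkv u E z)|right; exists (size E), (walkv u E w)]; exact: to_ec.
- have HPr := good_rev Hsym HPg.
  have Hg' : swp (nth (u, u) P i) \in rev (map (@swp V) P) by rewrite mem_rev map_f.
  have Hh' : has (share_vertex (swp (nth (u, u) P i))) Q.
    by rewrite (eq_has (a2 := share_vertex (nth (u, u) P i))) // => h; rewrite share_swp.
  have [E [H|H]] := main_u HG HPr HQg (ex_intro2 _ _ (swp (nth (u, u) P i)) Hg' Hh');
    [left; exists (size E), (walkv v E z)|right; exists (size E), (walkv v E w)]; exact: to_ec.
Qed.
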